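(* Let $p$ be a prime and define $a\in{\mathbb F}_p(x,y,z)^{{\mathbb N}}$ by $$a(n)=(x+y+z)^n-(x+y)^n-(x+z)^n-(y+z)^n+x^n+y^n+z^n.$$ Then ${\mathcal Z}(a)=\{p^n\mid n\in{\mathbb N}\}\cup\{p^n+p^m\mid n,m\in{\mathbb N}\}$.
   Context: ${\mathbb N}=\{0,1,2,\dots\}$, ${\mathbb F}_p(x,y,z)$ is the rational function field in three variables over the field with $p$ elements, and ${\mathcal Z}(a)=\{n\in{\mathbb N}\mid a(n)=0\}$. *)

(* Defs.v *)
From HB Require Import structures.
From mathcomp Require Import all_boot all_order all_algebra.
From mathcomp Require Import fraction.
From mathcomp Require Import mpoly.
Set Implicit Arguments. Unset Strict Implicit. Unset Printing Implicit Defensive.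
Import GRing.Theory.
Local Open Scope ring_scope.

Definition ratfun3 (p : nat) := {fraction {mpoly 'F_p[3]}}.

Definition vx (p : nat) : ratfun3 p := @FracField.tofrac {mpoly 'F_p[3]} 'X_0.
Definition vy (p : nat) : ratfun3 p := @FracField.tofrac {mpoly 'F_p[3]} 'X_1.
Definition vz (p : nat) : ratfun3 p := @FracField.tofrac {mpoly 'F_p[3]} 'X_2.

Definition seq_a (p : nat) (n : nat) : ratfun3 p :=
  let x := vx p in let y := vy p in let z := vz p in
  (x + y + z) ^+ n - (x + y) ^+ n - (x + z) ^+ n - (y + z) ^+ n
  + x ^+ n + y ^+ n + z ^+ n.

Definition zero_set (R : nzRingType) (a : nat -> R) : nat -> Prop :=
  fun n => a n = 0.

(* Main.v *)
Require Import Defs.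
From HB Require Import structures.
From mathcomp Require Import all_boot all_order all_algebra.
From mathcomp Require Import fraction.
From mathcomp Require Import mpoly.
From mathcomp Require Import ring.
Set Implicit Arguments. Unset Strict Implicit. Unset Printing Implicit Defensive.
Import GRing.Theory.
Local Open Scope ring_scope.

Definition F3 (R : nzRingType) (x y z : R) (n : nat) : R :=
  (x + y + z) ^+ n - (x + y) ^+ n - (x + z) ^+ n - (y + z) ^+ n
  + x ^+ n + y ^+ n + z ^+ n.

Lemma seq_aE p n : seq_a p n = F3 (vx p) (vy p) (vz p) n.
Proof. by []. Qed.

Lemma F3_rmorph (R S : nzRingType) (f : {rmorphism R -> S}) x y z n :
  f (F3 x y z n) = F3 (f x) (f y) (f z) n.
Proof. by rewrite /F3 !rmorphD !rmorphN !rmorphXn !rmorphD. Qed.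

Lemma frobk (R : comNzRingType) p (hp : p \in [pchar R]) k :
  [pchar R].-nat (p ^ k)%N.
Proof.
by rewrite (eq_pnat _ (pcharf_eq hp)) pnatX pnat_id // (pcharf_prime hp).
Qed.

Lemma F3_zero (R : comNzRingType) p (hp : p \in [pchar R]) (x y z : R) n :
  ((exists k : nat, n = (p ^ k)%N) \/
     (exists k m : nat, n = (p ^ k + p ^ m)%N)) -> F3 x y z n = 0.
Proof.
case=> [[k ->]|[k [m ->]]]; rewrite /F3.
  rewrite !(exprDn_pchar _ _ (frobk hp k)); ring.
rewrite !exprD !(exprDn_pchar _ _ (frobk hp k)) !(exprDn_pchar _ _ (frobk hp m)); ring.
Qed.

Lemma coefXaddCn (R : comNzRingType) (c : R) n i :
  (('X + c%:P) ^+ n)`_i = 'C(n, i)%:R * c ^+ (n - i).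
Proof.
rewrite addrC exprDn coef_sum.
under eq_bigr do rewrite coefMn -polyC_exp coefCM coefXn.
case: (leqP i n) => [hi|hi].
  rewrite (bigD1 (Ordinal (hi : (i < n.+1)%N))) //= eqxx mulr1 mulr_natl.
  rewrite big1 ?addr0 // => k hk; have -> : (i == k) = false.
    apply/negbTE; apply: contra hk => /eqP e; apply/eqP/val_inj; by rewrite /= e.
  by rewrite mulr0 mul0rn.
rewrite big1 ?bin_small ?mul0r // => k _.
have -> : (i == k) = false.
  by apply/negbTE; rewrite neq_ltn (leq_trans (ltn_ord k)) ?orbT.
by rewrite mulr0 mul0rn.
Qed.

Lemma coefF3 (R : comNzRingType) (y z : R) n i : (0 < i < n)%N ->
  (F3 'X y%:P z%:P n)`_i =
  'C(n, i)%:R * ((y + z) ^+ (n - i) - y ^+ (n - i) - z ^+ (n - i)).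
Proof.
case/andP=> hi0 hin.
have e1 : 'X + y%:P + z%:P = 'X + (y + z)%:P by rewrite polyCD addrA.
have e2 : y%:P + z%:P = (y + z)%:P by rewrite polyCD.
rewrite /F3 e1 e2 !coefD !coefN !coefXaddCn -!polyC_exp !coefC !coefXn.
rewrite (gtn_eqF hi0) (ltn_eqF hin) (_ : false%:R = 0 :> R) //; ring.
Qed.

Lemma coefG (R : comNzRingType) (z : R) m j : (0 < j < m)%N ->
  (('X + z%:P) ^+ m - 'X ^+ m - (z%:P) ^+ m)`_j = 'C(m, j)%:R * z ^+ (m - j).
Proof.
case/andP=> hj0 hjm.
rewrite !coefD !coefN coefXaddCn -polyC_exp coefC coefXn (gtn_eqF hj0) (ltn_eqF hjm).
by rewrite !subr0.
Qed.

Lemma compXn_pow (R : comNzRingType) (c : R) m q :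
  ('X ^+ q + c%:P) ^+ m = ('X + c%:P) ^+ m \Po 'X ^+ q.
Proof.
elim: m => [|m IH]; first by rewrite !expr0 -polyC1 comp_polyC.
by rewrite !exprS comp_polyM IH comp_polyD comp_polyX comp_polyC.
Qed.

Lemma bin_logn p (hp : prime p) n : (0 < n)%N ->
  ~~ (p %| 'C(n, p ^ logn p n))%N.
Proof.
move=> hn; case: (pfactor_coprime hp hn) => m cpm en.
set q := (p ^ logn p n)%N in en *.
have hF : p \in [pchar 'F_p] := pchar_Fp hp.
have hP : p \in [pchar {poly 'F_p}] by rewrite pchar_poly.
have hq : (0 < q)%N by rewrite expn_gt0 prime_gt0.
have key : (('X + 1%:P) ^+ n : {poly 'F_p}) = ('X + 1%:P) ^+ m \Po 'X^q.
  rewrite en mulnC exprM (exprDn_pchar _ _ (frobk hP _)) -polyC_exp expr1n.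
  by rewrite compXn_pow.
have := congr1 (fun P : {poly 'F_p} => P`_q) key => /=.
rewrite coefXaddCn coef_comp_poly_Xn // dvdnn divnn hq coefXaddCn bin1 !expr1n !mulr1.
move=> eC; rewrite (dvdn_pcharf hF) eC -(dvdn_pcharf hF) -prime_coprime //. 
Qed.

Lemma logn_le p n : (0 < n)%N -> (p ^ logn p n <= n)%N.
Proof. by move=> hn; apply: dvdn_leq hn (pfactor_dvdnn p n). Qed.

Lemma nt p (hp : prime p) n : (0 < n)%N ->
  (forall i j, (0 < i < n)%N -> (0 < j < n - i)%N ->
     (p %| 'C(n, i))%N \/ (p %| 'C(n - i, j))%N) ->
  (exists k : nat, n = (p ^ k)%N) \/ (exists k m : nat, n = (p ^ k + p ^ m)%N).
Proof.
move=> hn H.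
have hq := logn_le p hn.
have hq0 : (0 < p ^ logn p n)%N by rewrite expn_gt0 prime_gt0.
have := hq; rewrite leq_eqVlt => /orP [/eqP heq | hlt]; first by left; exists (logn p n).
set q := (p ^ logn p n)%N in hq hq0 hlt *.
have hn' : (0 < n - q)%N by rewrite subn_gt0.
have hq' := logn_le p hn'.
have hq0' : (0 < p ^ logn p (n - q))%N by rewrite expn_gt0 prime_gt0.
have := hq'; rewrite leq_eqVlt => /orP [/eqP heq' | hlt'].
  right; exists (logn p n), (logn p (n - q)); by rewrite heq' subnKC // ltnW.
case: (H q (p ^ logn p (n - q))%N); rewrite ?hq0 ?hlt ?hq0' ?hlt' //.
  by move/negP: (bin_logn hp hn).
by move/negP: (bin_logn hp hn').
Qed.

Theorem proposition3p2 (p : nat) (hp : prime p) :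
  forall n : nat,
    zero_set (seq_a p) n <->
    ((exists k : nat, n = (p ^ k)%N) \/
     (exists k m : nat, n = (p ^ k + p ^ m)%N)).
Proof.
move=> n; rewrite /zero_set seq_aE.
have hF : p \in [pchar 'F_p] := pchar_Fp hp.
have h1 : p \in [pchar {mpoly 'F_p[3]}] := rmorph_pchar (@mpolyC 3 'F_p) hF.
have h2 : p \in [pchar ratfun3 p] := rmorph_pchar (@tofrac _) h1.
split; last exact: F3_zero.
move=> H0.
have hn : (0 < n)%N.
  case: n H0 => // H0; exfalso.
  have : (1 : ratfun3 p) = 0 by rewrite -H0 /F3 !expr0; ring.
  by move/eqP; rewrite oner_eq0.
have A0 : F3 ('X_0) ('X_1) ('X_2) n = 0 :> {mpoly 'F_p[3]}.
  apply/eqP; rewrite -tofrac_eq0; apply/eqP; rewrite (F3_rmorph (@tofrac _)); exact: H0.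
pose T := {poly 'F_p}. pose U := {poly T}. pose S := {poly U}.
have hT : p \in [pchar T] by rewrite pchar_poly.
have hU : p \in [pchar U] by rewrite pchar_poly.
pose h := fun i : 'I_3 => if val i == 0%N then ('X : S) else
  if val i == 1%N then (('X : U)%:P) else ((('X : T)%:P)%:P).
have B0 : F3 ('X : S) (('X : U)%:P) ((('X : T)%:P)%:P) n = 0.
  have := congr1 (mmap (polyC \o polyC \o (@polyC 'F_p)) h) A0.
  by rewrite F3_rmorph rmorph0 /= !mmapX !mmap1U.
apply: (nt hp hn) => i j hi hj.
have := congr1 (fun P : S => P`_i) B0; rewrite /= coefF3 // coef0 => /eqP.
rewrite mulf_eq0 => /orP [hC | hG].
  by left; rewrite (dvdn_pcharf hU).
right; have := congr1 (fun P : U => P`_j) (eqP hG); rewrite /= coefG // coef0 => /eqP.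
rewrite mulf_eq0 expf_eq0 polyX_eq0 andbF orbF => hC.
by rewrite (dvdn_pcharf hT).
Qed.
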